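(* Let $Q$ be a finite set with $|Q|\ge2$, let $0\le r\le m$ be integers, let $G_m$ be the subgroup of $\mathcal D_m$ generated by some $r$ of the elements $g_0,\dots,g_{m-1}$, let $W=\{w\in Q^{\mathcal D_m}: w(g+\cdot)=w(\cdot)\ \forall g\in G_m\}$, and let $\nu$ be the uniform probability measure on $W$ (regarded as a measure on $Q^{\mathcal D_m}$). Then for every sufficiently small $\varepsilon>0$ there are constants $0<c\le C$ depending only on $\varepsilon$ and $|Q|$ such that $c\,2^{m-r}\le \mathbb H_\varepsilon(Q^{\mathcal D_m},\nu,\operatorname{dist}_m)\le C\,2^{m-r}$ whenever $m-r$ is large enough; i.e. $\mathbb H_\varepsilon(Q^{\mathcal D_m},\nu,\operatorname{dist}_m)\asymp 2^{m-r}$ as $m-r\to\infty$.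
   Context: $\mathcal D=\bigoplus_{i\ge0}\mathbb Z/2\mathbb Z$ with generators $g_0,g_1,\dots$; $\mathcal D_m=\langle g_0,\dots,g_{m-1}\rangle$ (of order $2^m$). $\mathcal T_m$ is the group of bijections $S$ of $\mathcal D_m$ that, for each $0<j<m$, map every coset of $\mathcal D_j$ in $\mathcal D_m$ onto a coset of $\mathcal D_j$ (this group is isomorphic to the automorphism group of the binary tree of height $m$); it acts on $Q^{\mathcal D_m}$ by $(Sw)(g)=w(S^{-1}g)$. $d_H(w_1,w_2)=2^{-m}|\{g\in\mathcal D_m:w_1(g)\ne w_2(g)\}|$ is the normalized Hamming metric, and $\operatorname{dist}_m(w_1,w_2)=\min_{S\in\mathcal T_m}d_H(w_1,Sw_2)$. For a semimetric probability space, $\mathbb H_\varepsilon$ is the binary logarithm of the least $k$ such that the space can be partitioned into sets $X_0,\dots,X_k$ with measure of $X_0$ less than $\varepsilon$ and each $X_j$, $j\ge1$, of diameter less than $\varepsilon$. *)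

(* Defs.v *)
From Stdlib Require Import Reals ClassicalEpsilon.
From HB Require Import structures.
From mathcomp Require Import all_boot all_fingroup.

Set Implicit Arguments.
Unset Strict Implicit.
Unset Printing Implicit Defensive.

Definition Dm (m : nat) : finType := {ffun 'I_m -> bool}.

Definition dadd (m : nat) (x y : Dm m) : Dm m := [ffun i => addb (x i) (y i)].

(* D_j inside D_m: the subgroup generated by g_0,...,g_{j-1},
   i.e. the elements with no coordinate >= j *)
Definition Dsub (m j : nat) : {set Dm m} :=
  [set x : Dm m | [forall i : 'I_m, (j <= i)%N ==> ~~ x i]].

Definition coset_D (m j : nat) (x : Dm m) : {set Dm m} :=
  [set dadd x y | y in Dsub m j].

Definition Tm (m : nat) : {set {perm Dm m}} :=
  [set S : {perm Dm m} |
     [forall j : 'I_m, (0 < j)%N ==>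
        [forall x : Dm m, [exists z : Dm m,
            S @: coset_D j x == coset_D j z]]]].

Definition Conf (Q : finType) (m : nat) : finType := {ffun Dm m -> Q}.

Definition tact (Q : finType) (m : nat) (S : {perm Dm m}) (w : Conf Q m)
  : Conf Q m := [ffun g => w ((S^-1)%g g)].

Local Open Scope R_scope.

Definition dH (Q : finType) (m : nat) (w1 w2 : Conf Q m) : R :=
  INR #|[set g | w1 g != w2 g]| / 2 ^ m.

(* dist_m(w1,w2) = min_{S in T_m} dH(w1, S w2); the identity is in T_m,
   so starting the fold at dH w1 w2 gives exactly the minimum *)
Definition dist_m (Q : finType) (m : nat) (w1 w2 : Conf Q m) : R :=
  \big[Rmin/dH w1 w2]_(S in Tm m) dH w1 (tact S w2).

(* subgroup of D_m generated by {g_i : i in I}: elements supported in I *)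
Definition Ggen (m : nat) (I : {set 'I_m}) : {set Dm m} :=
  [set x : Dm m | [forall i : 'I_m, x i ==> (i \in I)]].

Definition Winv (Q : finType) (m : nat) (G : {set Dm m}) : {set Conf Q m} :=
  [set w : Conf Q m | [forall g in G, [forall h : Dm m, w (dadd g h) == w h]]].

Definition nu_unif (T : finType) (W : {set T}) (X : {set T}) : R :=
  INR #|X :&: W| / INR #|W|.

Definition diam (T : finType) (d : T -> T -> R) (X : {set T}) : R :=
  \big[Rmax/0]_(x in X) \big[Rmax/0]_(y in X) d x y.

(* the space can be partitioned into X_0,...,X_k (X_j = f^{-1}(j)) with
   mu(X_0) < eps and diam X_j < eps for j >= 1 *)
Definition admissible (T : finType) (mu : {set T} -> R) (d : T -> T -> R)
  (eps : R) (k : nat) : Prop :=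
  exists f : T -> 'I_k.+1,
    mu [set x | nat_of_ord (f x) == 0%N] < eps /\
    forall j : 'I_k.+1, (0 < j)%N -> diam d [set x | f x == j] < eps.

Definition least_admissible (T : finType) (mu : {set T} -> R)
  (d : T -> T -> R) (eps : R) (k : nat) : Prop :=
  admissible mu d eps k /\ forall k', admissible mu d eps k' -> (k <= k')%N.

(* the least such k (it exists whenever eps > 0) *)
Definition kmin (T : finType) (mu : {set T} -> R) (d : T -> T -> R) (eps : R)
  : nat := epsilon (inhabits 0%N) (least_admissible mu d eps).

Definition log2 (x : R) : R := ln x / ln 2.

Definition Hent (T : finType) (mu : {set T} -> R) (d : T -> T -> R) (eps : R)
  : R := log2 (INR (kmin mu d eps)).

(* Main.v *)
Require Import Defs.
From Stdlib Require Import Reals.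
From HB Require Import structures.
From mathcomp Require Import all_boot all_fingroup.

Set Implicit Arguments.
Unset Strict Implicit.
Unset Printing Implicit Defensive.

Section Comb.

Definition agree (m j : nat) (a b : Dm m) : bool :=
  [forall i : 'I_m, (j <= i)%N ==> (a i == b i)].

Lemma agree_refl m j (a : Dm m) : agree j a a.
Proof. by apply/forallP => i; rewrite eqxx implybT. Qed.

Lemma agree_sym m j (a b : Dm m) : agree j a b = agree j b a.
Proof.
by apply/forallP/forallP => H i; rewrite eq_sym; apply: H.
Qed.

Lemma agree_trans m j (a b c : Dm m) : agree j a b -> agree j b c -> agree j a c.
Proof.
move=> /forallP H1 /forallP H2; apply/forallP => i; apply/implyP => hi.
by rewrite (eqP (implyP (H1 i) hi)) (implyP (H2 i) hi).
Qed.

Lemma agree0 m (a b : Dm m) : agree 0 a b = (a == b).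
Proof.
apply/forallP/eqP => [H|->]; last by move=> i; rewrite eqxx.
by apply/ffunP => i; apply/eqP; apply: (H i).
Qed.

Lemma agree_big m j (a b : Dm m) : (m <= j)%N -> agree j a b.
Proof.
move=> hj; apply/forallP => i; apply/implyP => hi.
by have := leq_trans hj hi; rewrite leqNgt ltn_ord.
Qed.

Lemma in_coset m j (x y : Dm m) : (y \in coset_D j x) = agree j y x.
Proof.
apply/imsetP/idP => [[z hz ->]|H].
  move: hz; rewrite inE => /forallP hz.
  apply/forallP => i; apply/implyP => hi; rewrite ffunE.
  by move: (implyP (hz i) hi) => /negbTE ->; rewrite addbF.
exists (dadd x y).
  rewrite inE; apply/forallP => i; apply/implyP => hi; rewrite ffunE.
  by move: (implyP ((forallP H) i) hi) => /eqP ->; rewrite addbb.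
by apply/ffunP => i; rewrite !ffunE addbA addbb.
Qed.

Definition Ptree m (s : Dm m -> Dm m) :=
  forall j a b, agree j a b = agree j (s a) (s b).

Lemma Tm_Ptree m (S : {perm Dm m}) : S \in Tm m -> Ptree S.
Proof.
move=> HS j a b.
case: j => [|j]; first by rewrite !agree0 (inj_eq (@perm_inj _ S)).
case: (leqP m j.+1) => hm; first by rewrite !agree_big.
move: HS; rewrite inE => /forallP /(_ (Ordinal hm)) /implyP /(_ isT).
move=> /forallP /(_ a) /existsP [z /eqP Hz] /=.
have Saz : agree j.+1 (S a) z.
  by rewrite -in_coset -Hz; apply: imset_f; rewrite in_coset agree_refl.
apply/idP/idP => H.
  have : S b \in coset_D j.+1 z.
    by rewrite -Hz; apply: imset_f; rewrite in_coset agree_sym.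
  rewrite in_coset => Sbz; apply: agree_trans Saz _; by rewrite agree_sym.
have : S b \in coset_D j.+1 z.
  rewrite in_coset; apply: agree_trans Saz; by rewrite agree_sym.
rewrite -Hz => /imsetP [c hc /perm_inj ->].
by rewrite agree_sym -in_coset.
Qed.

Lemma Ptree_inv m (S : {perm Dm m}) : Ptree S -> Ptree (S^-1)%g.
Proof. by move=> H j a b; rewrite [RHS]H !permKV. Qed.

Definition low m (g : Dm m.+1) : Dm m := [ffun i => g (widen_ord (leqnSn m) i)].
Definition top m (g : Dm m.+1) : bool := g ord_max.
Definition ext m (a : Dm m) (b : bool) : Dm m.+1 :=
  [ffun i => if unlift ord_max i is Some j then a j else b].

Lemma widen_lift m (j : 'I_m) : widen_ord (leqnSn m) j = lift ord_max j.
Proof. by apply: val_inj => /=; rewrite /bump leqNgt ltn_ord. Qed.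

Lemma low_ext m a b : low (@ext m a b) = a.
Proof. by apply/ffunP => i; rewrite !ffunE widen_lift liftK. Qed.

Lemma top_ext m a b : top (@ext m a b) = b.
Proof. by rewrite /top ffunE unlift_none. Qed.

Lemma ext_low_top m (g : Dm m.+1) : ext (low g) (top g) = g.
Proof.
apply/ffunP => i; rewrite ffunE.
case: unliftP => [j ->|->] //; by rewrite ffunE widen_lift.
Qed.

Lemma ext_inj m a b a' b' : @ext m a b = ext a' b' -> a = a' /\ b = b'.
Proof.
move=> H; split; first by rewrite -(low_ext a b) H low_ext.
by rewrite -(top_ext a b) H top_ext.
Qed.

Lemma dadd_ext m a b a' b' :
  dadd (@ext m a b) (ext a' b') = ext (dadd a a') (addb b b').
Proof. apply/ffunP => i; rewrite !ffunE; case: unliftP => [j _|_] //; by rewrite ffunE. Qed.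

Lemma agree_ext m j a b a' b' : (j <= m)%N ->
  agree j (@ext m a b) (ext a' b') = (b == b') && agree j a a'.
Proof.
move=> hj; apply/forallP/andP => [H|[/eqP hb /forallP H] i].
  split; first by move: (implyP (H ord_max) hj); rewrite !ffunE unlift_none.
  apply/forallP => i; apply/implyP => hi.
  have := implyP (H (lift ord_max i)); rewrite !ffunE liftK; apply.
  by rewrite /= /bump [(m <= _)%N]leqNgt ltn_ord.
rewrite !ffunE; case: unliftP => [k hk|_]; last by rewrite hb eqxx implybT.
apply/implyP => hi; apply: (implyP (H k)); move: hi; rewrite hk /= /bump [(m <= _)%N]leqNgt ltn_ord.
by rewrite add0n.
Qed.

Lemma agree_top m (g g' : Dm m.+1) : agree m g g' = (top g == top g').
Proof.
rewrite -[g]ext_low_top -[g']ext_low_top agree_ext // agree_big // andbT.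
by rewrite !top_ext.
Qed.

Definition d0m m : Dm m := [ffun _ => false].

Section Rec.
Variable m : nat.
Variable s : Dm m.+1 -> Dm m.+1.
Hypothesis Hs : Ptree s.

Definition pi_s (b : bool) := top (s (ext (d0m m) b)).
Definition sig_s (b : bool) (a : Dm m) := low (s (ext a b)).

Lemma top_s a b : top (s (ext a b)) = pi_s b.
Proof.
have : agree m (ext a b) (ext (d0m m) b) by rewrite agree_ext // eqxx agree_big.
by rewrite Hs agree_top => /eqP.
Qed.

Lemma s_ext a b : s (ext a b) = ext (sig_s b a) (pi_s b).
Proof. by rewrite -(top_s a) /sig_s ext_low_top. Qed.

Lemma pi_s_inj : pi_s true = ~~ pi_s false.
Proof.
have : agree m (ext (d0m m) true) (ext (d0m m) false) = false.
  by rewrite agree_ext.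
rewrite Hs agree_top !top_s.
by case: (pi_s true); case: (pi_s false).
Qed.

Lemma Ptree_sig b : Ptree (sig_s b).
Proof.
move=> j a a'; case: (leqP j m) => hj; last by rewrite !agree_big // ltnW.
by rewrite -[agree j a a']andTb -(eqxx b) -agree_ext // Hs !s_ext agree_ext // eqxx.
Qed.

End Rec.


Section Split.
Variables (R : Type) (idx : R) (op : Monoid.com_law idx).

Lemma sum_Dm_split m (F : Dm m.+1 -> R) :
  \big[op/idx]_(g : Dm m.+1) F g =
  \big[op/idx]_(b : bool) \big[op/idx]_(a : Dm m) F (ext a b).
Proof.
rewrite (reindex (fun p : Dm m * bool => ext p.1 p.2)); last first.
  exists (fun g => (low g, top g)) => [[a b] _|g _] /=.
    by rewrite low_ext top_ext.
  by rewrite ext_low_top.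
rewrite -(pair_bigA _ (fun a b => F (ext a b))) /=.
exact: exchange_big.
Qed.

End Split.

Definition half (Q : finType) m (x : Conf Q m.+1) (b : bool) : Conf Q m :=
  [ffun a => x (ext a b)].
Definition glue (Q : finType) m (x0 x1 : Conf Q m) : Conf Q m.+1 :=
  [ffun g => if top g then x1 (low g) else x0 (low g)].

Lemma half_glue (Q : finType) m (x0 x1 : Conf Q m) b :
  half (glue x0 x1) b = if b then x1 else x0.
Proof. by apply/ffunP => a; rewrite !ffunE top_ext low_ext; case: b. Qed.

Lemma glue_half (Q : finType) m (x : Conf Q m.+1) :
  glue (half x false) (half x true) = x.
Proof.
apply/ffunP => g; rewrite !ffunE -[in RHS](ext_low_top g).
by case: (top g).
Qed.

Definition d0 : Dm 0 := [ffun i => false].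

Fixpoint L (Q : finType) (m : nat) : Conf Q m -> Conf Q m -> nat :=
  match m return Conf Q m -> Conf Q m -> nat with
  | 0 => fun x y => nat_of_bool (x d0 != y d0)
  | m'.+1 => fun x y =>
     minn (L (half x false) (half y false) + L (half x true) (half y true))
          (L (half x false) (half y true) + L (half x true) (half y false))
  end.

Lemma card_sum (T : finType) (P : pred T) :
  #|[set g | P g]| = \sum_(g : T) nat_of_bool (P g).
Proof.
rewrite -sum1_card big_mkcond /=; apply: eq_bigr => g _.
by rewrite inE; case: (P g).
Qed.

Lemma Dm0_eq (g : Dm 0) : g = d0.
Proof. by apply/ffunP => -[]. Qed.

Lemma L_count_sum (Q : finType) m (s : Dm m -> Dm m) : Ptree s ->
  forall x y : Conf Q m, (L x y <= \sum_(g : Dm m) nat_of_bool (x g != y (s g)))%N.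
Proof.
elim: m s => [|m IH] s Hs x y /=.
  rewrite (bigD1 d0) //= (Dm0_eq (s d0)); exact: leq_addr.
rewrite sum_Dm_split big_bool /=.
have H b : (L (half x b) (half y (pi_s s b)) <=
     \sum_(a : Dm m) nat_of_bool (x (ext a b) != y (s (ext a b))))%N.
  apply: (leq_trans (IH _ (Ptree_sig Hs b) (half x b) (half y (pi_s s b)))).
  by apply: eq_leq; apply: eq_bigr => a _; rewrite !ffunE -(s_ext Hs).
have := H true; have := H false.
rewrite (pi_s_inj Hs); case: (pi_s s false) => /= h0 h1.
  apply: leq_trans (geq_minr _ _) _; rewrite addnC; exact: leq_add.
apply: leq_trans (geq_minl _ _) _; rewrite addnC; exact: leq_add.
Qed.

Lemma L_count (Q : finType) m (s : Dm m -> Dm m) : Ptree s ->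
  forall x y : Conf Q m, (L x y <= #|[set g | x g != y (s g)]|)%N.
Proof.
move=> Hs x y; rewrite (card_sum (fun g => x g != y (s g))).
exact: L_count_sum.
Qed.

Definition resI m (I : {set 'I_m.+1}) : {set 'I_m} :=
  [set i : 'I_m | widen_ord (leqnSn m) i \in I].

Lemma glue_ext (Q : finType) m (x0 x1 : Conf Q m) a b :
  glue x0 x1 (ext a b) = (if b then x1 else x0) a.
Proof. by rewrite ffunE top_ext low_ext; case: b. Qed.

Lemma Ggen_ext m (I : {set 'I_m.+1}) a b :
  (ext a b \in Ggen I) = (a \in Ggen (resI I)) && (b ==> (ord_max \in I)).
Proof.
rewrite !inE; apply/forallP/andP => [H|[/forallP Ha Hb] i].
  split; last by have := H ord_max; rewrite ffunE unlift_none.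
  apply/forallP => i; have := H (lift ord_max i).
  by rewrite ffunE liftK inE widen_lift.
rewrite ffunE; case: unliftP => [j ->|->] //.
by have := Ha j; rewrite inE widen_lift.
Qed.

Lemma Winv_P (Q : finType) m (G : {set Dm m}) (w : Conf Q m) :
  reflect (forall g h, g \in G -> w (dadd g h) = w h) (w \in Winv Q G).
Proof.
rewrite inE; apply: (iffP forallP) => [H g h hg|H g].
  by have := H g; rewrite hg => /forallP /(_ h) /eqP.
by apply/implyP => hg; apply/forallP => h; rewrite H.
Qed.

Lemma W_glue_notin (Q : finType) m (I : {set 'I_m.+1}) (x0 x1 : Conf Q m) :
  ord_max \notin I ->
  (glue x0 x1 \in Winv Q (Ggen I)) =
  (x0 \in Winv Q (Ggen (resI I))) && (x1 \in Winv Q (Ggen (resI I))).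
Proof.
move=> hI; apply/idP/andP => [/Winv_P H|[/Winv_P H0 /Winv_P H1]].
  have K b : (if b then x1 else x0) \in Winv Q (Ggen (resI I)).
    apply/Winv_P => g h hg.
    have := H (ext g false) (ext h b); rewrite Ggen_ext hg /= => /(_ isT).
    by rewrite dadd_ext /= !glue_ext.
  by split; [apply: (K false)|apply: (K true)].
apply/Winv_P => g h hg.
rewrite -(ext_low_top g) -(ext_low_top h) in hg *.
move: hg; rewrite Ggen_ext => /andP [hg].
case: (top g) => /=; first by rewrite (negbTE hI).
move=> _; rewrite dadd_ext /= !glue_ext.
by case: (top h); [apply: H1|apply: H0].
Qed.

Lemma W_glue_in (Q : finType) m (I : {set 'I_m.+1}) (x0 x1 : Conf Q m) :
  ord_max \in I ->
  (glue x0 x1 \in Winv Q (Ggen I)) =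
  (x0 \in Winv Q (Ggen (resI I))) && (x1 == x0).
Proof.
move=> hI; apply/idP/andP => [/Winv_P H|[/Winv_P H0 /eqP ->]].
  split.
    apply/Winv_P => g h hg.
    have := H (ext g false) (ext h false); rewrite Ggen_ext hg /= => /(_ isT).
    by rewrite dadd_ext /= !glue_ext.
  apply/eqP/ffunP => a.
  have Hg : ext (d0m m) true \in Ggen I.
    by rewrite Ggen_ext hI andbT inE; apply/forallP => i; rewrite ffunE.
  have := H _ (ext a false) Hg; rewrite dadd_ext /= !glue_ext.
  have -> // : dadd (d0m m) a = a by apply/ffunP => i; rewrite !ffunE.
apply/Winv_P => g h hg.
rewrite -(ext_low_top g) -(ext_low_top h) in hg *.
move: hg; rewrite Ggen_ext => /andP [hg _].
rewrite dadd_ext !glue_ext.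
by case: (addb _ _); case: (top h); rewrite H0.
Qed.

Section SumW.
Variables (R : Type) (idx : R) (op : Monoid.com_law idx).

Lemma sum_Conf_split (Q : finType) m (F : Conf Q m.+1 -> R) :
  \big[op/idx]_(x : Conf Q m.+1) F x =
  \big[op/idx]_(x0 : Conf Q m) \big[op/idx]_(x1 : Conf Q m) F (glue x0 x1).
Proof.
rewrite (reindex (fun p : Conf Q m * Conf Q m => glue p.1 p.2)); last first.
  exists (fun x => (half x false, half x true)) => [[a b] _|x _] /=.
    by rewrite !half_glue.
  by rewrite glue_half.
by rewrite -(pair_bigA _ (fun a b => F (glue a b))).
Qed.

Lemma sum_W_notin (Q : finType) m (I : {set 'I_m.+1}) (F : Conf Q m.+1 -> R) :
  ord_max \notin I ->
  \big[op/idx]_(x in Winv Q (Ggen I)) F x =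
  \big[op/idx]_(x0 in Winv Q (Ggen (resI I)))
    \big[op/idx]_(x1 in Winv Q (Ggen (resI I))) F (glue x0 x1).
Proof.
move=> hI; rewrite big_mkcond sum_Conf_split [RHS]big_mkcond; apply: eq_bigr => x0 _.
case: ifP => h0.
  rewrite [RHS]big_mkcond; apply: eq_bigr => x1 _; by rewrite W_glue_notin // h0.
by apply: big1 => x1 _; rewrite W_glue_notin // h0.
Qed.

Lemma sum_W_in (Q : finType) m (I : {set 'I_m.+1}) (F : Conf Q m.+1 -> R) :
  ord_max \in I ->
  \big[op/idx]_(x in Winv Q (Ggen I)) F x =
  \big[op/idx]_(x0 in Winv Q (Ggen (resI I))) F (glue x0 x0).
Proof.
move=> hI; rewrite big_mkcond sum_Conf_split [RHS]big_mkcond; apply: eq_bigr => x0 _.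
case: ifP => h0.
  rewrite (bigD1 x0) //= W_glue_in // h0 eqxx /= big1 ?Monoid.mulm1 // => x1 hx.
  by rewrite W_glue_in // h0 (negbTE hx).
by apply: big1 => x1 _; rewrite W_glue_in // h0.
Qed.

End SumW.

Lemma card_resI m (I : {set 'I_m.+1}) :
  #|I| = (#|resI I| + (ord_max \in I))%N.
Proof.
rewrite -!sum1_card big_mkcond big_ord_recr /= [in RHS]big_mkcond /=.
congr (_ + _)%N; try by case: (ord_max \in I).
by apply: eq_bigr => i _; rewrite inE.
Qed.

Lemma card_le m (I : {set 'I_m}) : (#|I| <= m)%N.
Proof. by have := max_card I; rewrite card_ord. Qed.

Lemma card_W (Q : finType) m (I : {set 'I_m}) :
  #|Winv Q (Ggen I)| = (#|Q| ^ (2 ^ (m - #|I|)))%N.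
Proof.
elim: m I => [|m IH] I.
  have -> : #|I| = 0%N by have := card_le I; case: #|I|.
  have -> : Winv Q (Ggen I) = [set: Conf Q 0].
    apply/setP => w; rewrite in_setT; apply/Winv_P => g h _.
    by rewrite (Dm0_eq (dadd g h)) (Dm0_eq h).
  by rewrite cardsT card_ffun card_ffun card_ord card_bool.
have hr := card_le (resI I).
rewrite -sum1_card (card_resI I).
case: (boolP (ord_max \in I)) => hI.
  rewrite (sum_W_in _ _ hI) sum1_card IH addn1 subSS //.
rewrite (sum_W_notin _ _ hI).
under eq_bigr => x0 _ do rewrite sum1_card IH.
rewrite sum_nat_const IH /= addn0 subSn // -expnD addnn -mul2n -expnS //.
Qed.

Definition cst (Q : finType) m (c : Q) : Conf Q m := [ffun _ => c].

Lemma W_setT (Q : finType) m :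
  Winv Q (Ggen [set: 'I_m]) = [set cst m c | c in [set: Q]].
Proof.
apply/setP => w; apply/idP/imsetP => [/Winv_P H|[c _ ->]].
  exists (w (d0m m)) => //; apply/ffunP => g; rewrite ffunE.
  have -> : g = dadd g (d0m m) by apply/ffunP => i; rewrite !ffunE addbF.
  apply: H; rewrite inE; apply/forallP => i; by rewrite inE implybT.
by apply/Winv_P => g h _; rewrite !ffunE.
Qed.

Lemma card_full m (I : {set 'I_m}) : #|I| = m -> I = [set: 'I_m].
Proof.
move=> h; apply/eqP; by rewrite eqEcard subsetT cardsT card_ord h leqnn.
Qed.

Lemma half_cst (Q : finType) m (c : Q) b : half (cst m.+1 c) b = cst m c.
Proof. by apply/ffunP => a; rewrite !ffunE. Qed.

Lemma L_cst (Q : finType) m (c d : Q) :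
  L (cst m c) (cst m d) = (2 ^ m * (c != d))%N.
Proof.
elim: m => [|m IH] /=; first by rewrite !ffunE mul1n.
rewrite !half_cst IH minnn expnS -mulnA mul2n -addnn //.
Qed.
End Comb.

From mathcomp Require Import Rstruct.
From Stdlib Require Import Lra Classical ClassicalEpsilon.
Local Open Scope R_scope.

Notation "\rsum_ ( i 'in' A ) F" := (\big[Rplus/0]_(i in A) F)
  (at level 41, F at level 41, i, A at level 50).

Lemma sumR_le (T : finType) (P : pred T) (F G : T -> R) :
  (forall i, P i -> F i <= G i) ->
  \big[Rplus/0]_(i | P i) F i <= \big[Rplus/0]_(i | P i) G i.
Proof.
move=> H; apply: (big_ind2 (fun a b => a <= b)) => //; first lra.
by move=> a b c d; lra.
Qed.

Lemma sumR_ge0 (T : finType) (P : pred T) (F : T -> R) :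
  (forall i, P i -> 0 <= F i) -> 0 <= \big[Rplus/0]_(i | P i) F i.
Proof.
move=> H; apply: (big_ind (fun a => 0 <= a)) => //; first lra.
by move=> a b; lra.
Qed.

Lemma sumR_sub (T : finType) (A B : pred T) (F : T -> R) :
  (forall i, A i -> B i) -> (forall i, B i -> 0 <= F i) ->
  \big[Rplus/0]_(i | A i) F i <= \big[Rplus/0]_(i | B i) F i.
Proof.
move=> hAB hF; rewrite big_mkcond [X in _ <= X]big_mkcond /=.
apply: sumR_le => i _; case: ifP => hA; first by rewrite (hAB _ hA); lra.
case: ifP => hB; [exact: hF|lra].
Qed.

Lemma sumR_const (T : finType) (A : pred T) (c : R) :
  \big[Rplus/0]_(i | A i) c = INR #|A| * c.
Proof.
rewrite big_const; elim: #|A| => [|k IH]; first by rewrite /=; lra.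
rewrite iterS IH S_INR; lra.
Qed.

Lemma INR_sum (T : finType) (A : pred T) (F : T -> nat) :
  INR (\sum_(i | A i) F i) = \big[Rplus/0]_(i | A i) INR (F i).
Proof. exact: (big_morph INR plus_INR). Qed.

Definition lam := ln 16.
Lemma lam_pos : 0 < lam.
Proof. rewrite /lam -ln_1; apply: ln_increasing; lra. Qed.

Definition wt (r l : nat) : R := exp (- (lam / 2 ^ r) * INR l).

Lemma wt_pos r l : 0 < wt r l.
Proof. exact: exp_pos. Qed.

Lemma wt_add r a b : wt r (a + b) = wt r a * wt r b.
Proof. by rewrite /wt -exp_plus plus_INR; congr exp; ring. Qed.

Lemma wt_min r a b : wt r (minn a b) <= wt r a + wt r b.
Proof.
have := wt_pos r a; have := wt_pos r b.
case: (leqP a b) => h; lra.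
Qed.

Lemma wt_double r a : wt r.+1 (a + a) = wt r a.
Proof.
rewrite /wt plus_INR; congr exp; rewrite /= .
have h : 0 < 2 ^ r by apply: pow_lt; lra.
field; lra.
Qed.

Section Sum4.
Variables (T : finType) (A : pred T).

Lemma sum4_le (F G : T -> T -> T -> T -> R) :
  (forall a b c d, A a -> A b -> A c -> A d -> F a b c d <= G a b c d) ->
  \rsum_(a in A) \rsum_(b in A) \rsum_(c in A) \rsum_(d in A) F a b c d <=
  \rsum_(a in A) \rsum_(b in A) \rsum_(c in A) \rsum_(d in A) G a b c d.
Proof.
move=> H; do 4! (apply: sumR_le => ? ?); exact: H.
Qed.

Lemma sum4_split (F G : T -> T -> T -> T -> R) :
  \rsum_(a in A) \rsum_(b in A) \rsum_(c in A) \rsum_(d in A) (F a b c d + G a b c d) =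
  \rsum_(a in A) \rsum_(b in A) \rsum_(c in A) \rsum_(d in A) F a b c d +
  \rsum_(a in A) \rsum_(b in A) \rsum_(c in A) \rsum_(d in A) G a b c d.
Proof.
rewrite -big_split; apply: eq_bigr => a _.
rewrite -big_split; apply: eq_bigr => b _.
rewrite -big_split; apply: eq_bigr => c _.
by rewrite -big_split.
Qed.

Lemma sum4_prod (f g : T -> T -> R) :
  \rsum_(a in A) \rsum_(b in A) \rsum_(c in A) \rsum_(d in A) (f a c * g b d) =
  (\rsum_(a in A) \rsum_(c in A) f a c) * (\rsum_(b in A) \rsum_(d in A) g b d).
Proof.
rewrite big_distrl; apply: eq_bigr => a _ /=.
rewrite big_distrl /=.
under [RHS]eq_bigr => c _ do rewrite big_distrr /=.
rewrite exchange_big; apply: eq_bigr => b _; apply: eq_bigr => c _.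
by rewrite big_distrr.
Qed.

Lemma sum4_prod' (f g : T -> T -> R) :
  \rsum_(a in A) \rsum_(b in A) \rsum_(c in A) \rsum_(d in A) (f a d * g b c) =
  (\rsum_(a in A) \rsum_(c in A) f a c) * (\rsum_(b in A) \rsum_(d in A) g b d).
Proof.
rewrite -sum4_prod; apply: eq_bigr => a _; apply: eq_bigr => b _.
exact: exchange_big.
Qed.

End Sum4.

Definition Esum (Q : finType) m (I : {set 'I_m}) : R :=
  \rsum_(x in Winv Q (Ggen I)) \rsum_(y in Winv Q (Ggen I)) wt #|I| (L x y).

Lemma Esum_ge0 (Q : finType) m (I : {set 'I_m}) : 0 <= Esum Q I.
Proof.
apply: sumR_ge0 => x _; apply: sumR_ge0 => y _; exact: Rlt_le (wt_pos _ _).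
Qed.

Lemma E_in (Q : finType) m (I : {set 'I_m.+1}) :
  ord_max \in I -> Esum Q I = Esum Q (resI I).
Proof.
move=> hI; rewrite /Esum (sum_W_in _ _ hI); apply: eq_bigr => a _.
rewrite (sum_W_in _ _ hI); apply: eq_bigr => c _.
by rewrite /= !half_glue /= minnn (card_resI I) hI addn1 wt_double.
Qed.

Lemma E_notin (Q : finType) m (I : {set 'I_m.+1}) :
  ord_max \notin I -> Esum Q I <= 2 * (Esum Q (resI I)) ^ 2.
Proof.
move=> hI.
have hr : #|I| = #|resI I| by rewrite (card_resI I) (negbTE hI) addn0.
set W' := Winv Q (Ggen (resI I)).
have -> : Esum Q I = \rsum_(a in W') \rsum_(b in W') \rsum_(c in W') \rsum_(d in W')
     wt #|I| (L (glue a b) (glue c d)).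
  rewrite /Esum (sum_W_notin _ _ hI); apply: eq_bigr => a _; apply: eq_bigr => b _.
  by rewrite (sum_W_notin _ _ hI).
apply: Rle_trans.
  apply: (sum4_le (G := fun a b c d =>
     wt #|I| (L a c) * wt #|I| (L b d) + wt #|I| (L a d) * wt #|I| (L b c))).
  move=> a b c d _ _ _ _ /=; rewrite !half_glue /= -!wt_add; exact: wt_min.
rewrite sum4_split sum4_prod sum4_prod' /Esum hr /W'; right; ring.
Qed.

Lemma INR_exp2 m : INR (2 ^ m)%N = 2 ^ m.
Proof. elim: m => [|m IH] //=; rewrite expnS mult_INR IH /=; ring. Qed.

Lemma sum_W_cst (Q : finType) m (F : Conf Q m -> R) :
  \rsum_(x in Winv Q (Ggen [set: 'I_m])) F x = \big[Rplus/0]_(c : Q) F (cst m c).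
Proof.
rewrite W_setT big_imset /=; first by apply: eq_bigl => c; rewrite inE.
by move=> c d _ _ /ffunP /(_ (d0m m)); rewrite !ffunE.
Qed.

Lemma sum_eq1 (T : finType) (a : T) : (\sum_(c : T) (a == c : nat))%N = 1%N.
Proof.
rewrite (bigD1 a) //= eqxx big1 // => c hc.
by rewrite eq_sym (negbTE hc).
Qed.

Lemma mt_bound (Q : finType) (a b c d : Q) :
  ((minn ((a != c) + (b != d)) ((a != d) + (b != c)) == 0 : nat) <=
   (a == c) * (b == d) + (a != b) * (b == c) * (a == d))%N.
Proof.

case: (a =P c) => [<-|ac]; case: (b =P d) => [<-|bd]; rewrite ?eqxx /=.
- by case: (_ == 0%N); rewrite ?leq0n ?mul1n ?leq_addr.
- case: (a =P d) => [ad|nad]; case: (b =P a) => [ba|nba] //=.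
  exfalso; apply: bd; by rewrite ba ad.
- case: (a =P b) => [ab|nab]; case: (b =P c) => [bc|nbc] //=.
  exfalso; apply: ac; by rewrite ab bc.
- case: (a =P d) => [ad|nad]; case: (b =P c) => [bc|nbc] //=.
  case: (a =P b) => [ab|nab] //=; exfalso; apply: ac; by rewrite ab bc.
Qed.

Lemma count_match (Q : finType) :
  (\sum_(a : Q) \sum_(b : Q) \sum_(c : Q) \sum_(d : Q)
     (minn ((a != c) + (b != d)) ((a != d) + (b != c)) == 0 : nat)
   + #|Q| <= 2 * #|Q| * #|Q|)%N.
Proof.
have H1 (a b : Q) : (\sum_(c : Q) \sum_(d : Q)
     (minn ((a != c) + (b != d)) ((a != d) + (b != c)) == 0 : nat)
     <= 1 + (a != b))%N.
  apply: (@leq_trans (\sum_(c : Q) \sum_(d : Q)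
     ((a == c) * (b == d) + (a != b) * (b == c) * (a == d)))).
    by apply: leq_sum => c _; apply: leq_sum => d _; apply: mt_bound.
  under eq_bigr => c _ do rewrite big_split /=.
  rewrite big_split /=.
  under eq_bigr => c _ do rewrite -big_distrr /=.
  rewrite sum_eq1.
  under eq_bigr => c _ do rewrite muln1.
  rewrite sum_eq1 leq_add2l.
  under eq_bigr => c _ do rewrite -big_distrr /=.
  rewrite sum_eq1.
  under eq_bigr => c _ do rewrite muln1.
  by rewrite -big_distrr /= sum_eq1 muln1.
have H2 (a : Q) : (\sum_(b : Q) (1 + (a != b)) + 1 = 2 * #|Q|)%N.
  have h : (\sum_(b : Q) (a != b : nat) + \sum_(b : Q) (a == b : nat) = #|Q|)%N.
    rewrite -big_split /= -sum1_card; apply: eq_bigr => b _.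
    by case: (a == b).
  rewrite big_split /= sum1_card -addnA; move: h; rewrite sum_eq1 => ->.
  by rewrite mul2n addnn.
apply: (@leq_trans (\sum_(a:Q) \sum_(b:Q) (1 + (a != b)) + #|Q|)%N).
  rewrite leq_add2r; apply: leq_sum => a _; apply: leq_sum => b _; exact: H1.
rewrite -[X in (_ + X <= _)%N]sum1_card -big_split /=.
rewrite (eq_bigr (fun _ => 2 * #|Q|)%N); last by move=> a _; rewrite H2.
by rewrite big_const iter_addn_0 mulnC mulnA.
Qed.

Lemma sum4_split_T (T : finType) (F G : T -> T -> T -> T -> R) :
  \big[Rplus/0]_(a : T) \big[Rplus/0]_(b : T) \big[Rplus/0]_(c : T) \big[Rplus/0]_(d : T) (F a b c d + G a b c d) =
  \big[Rplus/0]_(a : T) \big[Rplus/0]_(b : T) \big[Rplus/0]_(c : T) \big[Rplus/0]_(d : T) F a b c d +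
  \big[Rplus/0]_(a : T) \big[Rplus/0]_(b : T) \big[Rplus/0]_(c : T) \big[Rplus/0]_(d : T) G a b c d.
Proof.
rewrite -big_split; apply: eq_bigr => a _.
rewrite -big_split; apply: eq_bigr => b _.
rewrite -big_split; apply: eq_bigr => c _.
by rewrite -big_split.
Qed.

Lemma exp_mlam : exp (- lam) = / 16.
Proof. by rewrite exp_Ropp /lam exp_ln //; lra. Qed.

Lemma E_special (Q : finType) m (I : {set 'I_m.+1}) : (2 <= #|Q|)%N ->
  ord_max \notin I -> #|resI I| = m -> Esum Q I <= 7 / 16 * INR #|Q| ^ 4.
Proof.
move=> hQ hI hm.
have hr : #|I| = m by rewrite (card_resI I) (negbTE hI) addn0.
have hfull := card_full hm.
have -> : Esum Q I = \big[Rplus/0]_(a : Q) \big[Rplus/0]_(b : Q)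
   \big[Rplus/0]_(c : Q) \big[Rplus/0]_(d : Q)
     wt m (L (glue (cst m a) (cst m b)) (glue (cst m c) (cst m d))).
  rewrite /Esum hr (sum_W_notin _ _ hI) hfull sum_W_cst; apply: eq_bigr => a _.
  rewrite sum_W_cst; apply: eq_bigr => b _.
  rewrite (sum_W_notin _ _ hI) hfull sum_W_cst; apply: eq_bigr => c _.
  by rewrite sum_W_cst.
apply: Rle_trans.
  apply: (sumR_le (G := fun a => \big[Rplus/0]_(b : Q) \big[Rplus/0]_(c : Q) \big[Rplus/0]_(d : Q)
    (INR (minn ((a != c) + (b != d)) ((a != d) + (b != c)) == 0%N : nat) + / 16))) => a _.
  apply: sumR_le => b _; apply: sumR_le => c _; apply: sumR_le => d _.
  rewrite /= !half_glue /= !L_cst -!mulnDr -minnMr /wt mult_INR INR_exp2.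
  set k := minn _ _.
  have h2 : 0 < 2 ^ m by apply: pow_lt; lra.
  have -> : - (lam / 2 ^ m) * (2 ^ m * INR k) = - lam * INR k by field; lra.
  case: k => [|k].
    rewrite /= Rmult_0_r exp_0; lra.
  have -> : INR (k.+1 == 0%N) = 0 by [].
  have hk : 1 <= INR k.+1 by rewrite S_INR; have := pos_INR k; lra.
  have : exp (- lam * INR k.+1) <= exp (- lam).
    have := lam_pos => hl.
    case: (Req_dec (INR k.+1) 1) => [->|hk1]; first by rewrite Rmult_1_r; lra.
    left; apply: exp_increasing; nra.
  rewrite exp_mlam; lra.
rewrite sum4_split_T.
set N := (\sum_(a : Q) \sum_(b : Q) \sum_(c : Q) \sum_(d : Q)
     (minn ((a != c) + (b != d)) ((a != d) + (b != c)) == 0 : nat))%N.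
have -> : \big[Rplus/0]_(a : Q) \big[Rplus/0]_(b : Q) \big[Rplus/0]_(c : Q) \big[Rplus/0]_(d : Q)
     INR (minn ((a != c) + (b != d)) ((a != d) + (b != c)) == 0%N : nat) = INR N.
  rewrite /N INR_sum; apply: eq_bigr => a _; rewrite INR_sum; apply: eq_bigr => b _.
  rewrite INR_sum; apply: eq_bigr => c _; by rewrite INR_sum.
have hc (T : finType) (c : R) : \big[Rplus/0]_(i : T) c = INR #|T| * c.
  exact: sumR_const.
rewrite (eq_bigr (fun _ => INR #|Q| ^ 3 * / 16)); last first.
  move=> a _; rewrite (eq_bigr (fun _ => INR #|Q| ^ 2 * / 16)); last first.
    move=> b _; rewrite (eq_bigr (fun _ => INR #|Q| * / 16)); last first.
      by move=> c _; rewrite hc.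
    rewrite hc; ring.
  rewrite hc; ring.
rewrite hc.
have hN := count_match Q; rewrite -/N in hN.
move/leP: hN => /le_INR; rewrite plus_INR !mult_INR => hN.
have hq : 2 <= INR #|Q| by apply: (le_INR 2); apply/leP.
set q := INR #|Q| in hN hq *.
have : 0 <= (q - 2) * (3 * q ^ 2 + 6 * q - 4) * q by apply: Rmult_le_pos; [apply: Rmult_le_pos|]; nra.
simpl in hN; nra.
Qed.

Lemma INR_expn a b : INR (a ^ b)%N = INR a ^ b.
Proof. elim: b => [|b IH] //=; rewrite expnS mult_INR IH; ring. Qed.

Lemma E_bound (Q : finType) m (I : {set 'I_m}) : (2 <= #|Q|)%N ->
  (1 <= m - #|I|)%N ->
  Esum Q I <= / 2 * (7/8) ^ (2 ^ (m - #|I|).-1) * INR #|Winv Q (Ggen I)| ^ 2.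
Proof.
move=> hQ; elim: m I => [|m IH] I; first by rewrite sub0n.
have hr := card_le (resI I).
case: (boolP (ord_max \in I)) => hI.
  have e : (m.+1 - #|I| = m - #|resI I|)%N by rewrite (card_resI I) hI addn1 subSS.
  rewrite E_in // !card_W e => hn.
  by have := IH (resI I) hn; rewrite card_W.
have e : (m.+1 - #|I| = (m - #|resI I|).+1)%N.
  by rewrite (card_resI I) (negbTE hI) addn0 subSn.
rewrite !card_W e succnK => _.
case hn: (m - #|resI I|)%N => [|n].
  have hm : #|resI I| = m by apply/eqP; rewrite eqn_leq hr /= -subn_eq0 hn.
  apply: Rle_trans (E_special hQ hI hm) _.
  rewrite INR_expn /=; right; field.
have IH' := IH (resI I); rewrite card_W hn succnK in IH'.
have h0 := Esum_ge0 Q (resI I).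
apply: Rle_trans (E_notin _ hI) _.
have := IH' isT.
set a := (7/8) ^ (2 ^ n).
set w := INR (#|Q| ^ 2 ^ n.+1)%N.
move=> h1.
have h2 : Esum Q (resI I) ^ 2 <= (/ 2 * a * w ^ 2) ^ 2.
  by apply: pow_incr; split.
have -> : (7/8) ^ (2 ^ n.+1) = a ^ 2 by rewrite /a -pow_mult expnS mulnC.
have -> : INR (#|Q| ^ 2 ^ n.+2)%N = w ^ 2.
  by rewrite /w -INR_expn -expnM [(2 ^ n.+2)%N]expnS mulnC.
have h3 : 0 <= 2 by lra.
apply: Rle_trans (Rmult_le_compat_l 2 _ _ h3 h2) _.
right; field.
Qed.

Lemma Rmax_big_ge (T : finType) (P : pred T) (F : T -> R) x :
  P x -> F x <= \big[Rmax/0]_(i | P i) F i.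
Proof.
have : x \in index_enum T by rewrite mem_index_enum.
elim: (index_enum T) => [//|a s IH] /=.
rewrite inE big_cons => /orP [/eqP <-|hs] hP.
  by rewrite hP; apply: Rmax_l.
case: ifP => _; last exact: IH.
apply: Rle_trans (IH hs hP) _; apply: Rmax_r.
Qed.

Lemma diam_ge (T : finType) (d : T -> T -> R) (X : {set T}) x y :
  x \in X -> y \in X -> d x y <= diam d X.
Proof.
move=> hx hy; rewrite /diam.
apply: Rle_trans (Rmax_big_ge (fun x => \big[Rmax/0]_(y in X) d x y) hx).
exact: (Rmax_big_ge (d x) hy).
Qed.

Lemma diam_le0 (T : finType) (d : T -> T -> R) (X : {set T}) :
  (forall x y, x \in X -> y \in X -> d x y <= 0) -> diam d X <= 0.
Proof.
move=> H; rewrite /diam; apply: (big_rec (fun v => v <= 0)); first lra.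
move=> x v hx hv; apply: Rmax_lub => //.
apply: (big_rec (fun v => v <= 0)); first lra.
move=> y u hy hu; apply: Rmax_lub => //; exact: H.
Qed.

Lemma pow2_pos m : 0 < 2 ^ m.
Proof. apply: pow_lt; lra. Qed.

Lemma dH_L (Q : finType) m (x y : Conf Q m) (s : Dm m -> Dm m) :
  Ptree s -> INR (L x y) / 2 ^ m <= INR #|[set g | x g != y (s g)]| / 2 ^ m.
Proof.
move=> hs; have h := pow2_pos m.
apply: Rmult_le_compat_r; first by apply: Rlt_le; apply: Rinv_0_lt_compat.
by apply: le_INR; apply/leP; apply: L_count.
Qed.

Lemma dist_lb (Q : finType) m (x y : Conf Q m) :
  INR (L x y) / 2 ^ m <= dist_m x y.
Proof.
rewrite /dist_m; apply: (big_rec (fun v => INR (L x y) / 2 ^ m <= v)).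
  by apply: (@dH_L Q m x y id).
move=> S v hS hv; apply: Rmin_glb => //.
rewrite /dH.
have -> : [set g | x g != tact S y g] = [set g | x g != y ((S^-1)%g g)].
  by apply/setP => g; rewrite !inE ffunE.
by apply: dH_L; apply: Ptree_inv; apply: Tm_Ptree.
Qed.

Lemma dist_self (Q : finType) m (x : Conf Q m) : dist_m x x <= 0.
Proof.
rewrite /dist_m; apply: (big_rec (fun v => v <= 0)).
  rewrite /dH.
  have -> : [set g | x g != x g] = set0 by apply/setP => g; rewrite !inE eqxx.
  by rewrite cards0 /= /Rdiv Rmult_0_l; lra.
move=> S v _ hv; apply: Rle_trans (Rmin_r _ _) hv.
Qed.

Lemma adm_upper (Q : finType) m (I : {set 'I_m}) eps : 0 < eps ->
  admissible (nu_unif (Winv Q (Ggen I))) (@dist_m Q m) eps #|Winv Q (Ggen I)|.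
Proof.
move=> he; set W := Winv Q (Ggen I); clearbody W.
have hidx x : x \in W -> ((index x (enum W)).+1 < #|W|.+1)%N.
  by move=> hx; rewrite ltnS cardE index_mem mem_enum.
pose f x : 'I_#|W|.+1 := if x \in W then inord (index x (enum W)).+1 else ord0.
have fval x : x \in W -> nat_of_ord (f x) = (index x (enum W)).+1.
  by move=> hx; rewrite /f hx inordK // hidx.
exists f; split.
  rewrite /nu_unif [X in INR X](_ : _ = 0%N) /= ?/Rdiv ?Rmult_0_l //.
  apply/eqP; rewrite cards_eq0; apply/eqP/setP => x; rewrite !inE.
  case: (boolP (x \in W)) => hx; rewrite ?andbT ?andbF //.
  by rewrite fval.
move=> j hj; apply: Rle_lt_trans he; apply: diam_le0 => x y.
rewrite !inE => /eqP hx /eqP hy.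
have inW z : f z = j -> z \in W.
  by move=> hz; apply/negPn/negP => hn; move: hj; rewrite -hz /f (negbTE hn).
have hxW := inW _ hx; have hyW := inW _ hy.
have : nat_of_ord (f x) = nat_of_ord (f y) by rewrite hx hy.
rewrite !fval // => -[] hxy.
have -> : x = y.
  have hxe : x \in enum W by rewrite mem_enum.
  by rewrite -(nth_index x hxe) hxy nth_index // mem_enum.
exact: dist_self.
Qed.

Lemma exp_pow x N : exp x ^ N = exp (INR N * x).
Proof.
elim: N => [|N IH]; first by rewrite /= Rmult_0_l exp_0.
rewrite -[exp x ^ N.+1]/(exp x * exp x ^ N) IH S_INR -exp_plus; congr exp; ring.
Qed.

Lemma sumR_const_set (T : finType) (A : {set T}) (c : R) :
  \rsum_(i in A) c = INR #|A| * c.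
Proof. by rewrite sumR_const; congr (INR _ * _); apply: eq_card. Qed.

Lemma adm_lower (Q : finType) m (I : {set 'I_m}) eps k n2 :
  (2 <= #|Q|)%N -> (m - #|I| = n2.+2)%N -> 0 < eps -> eps < 1 ->
  exp (2 * lam * eps) <= 15/14 ->
  admissible (nu_unif (Winv Q (Ggen I))) (@dist_m Q m) eps k ->
  (1 - eps) * (16/15) ^ (2 ^ n2) <= INR k.
Proof.
move=> hQ hn he he1 hexp [f [h0 hj]].
set W := Winv Q (Ggen I).
set n := (m - #|I|)%N.
set r := #|I|.
have hmr : (m = r + n)%N by rewrite /n /r addnC subnK // card_le.
have hw : 0 < INR #|W|.
  apply: lt_0_INR; apply/ltP; rewrite /W card_W expn_gt0.
  by apply/orP; left; apply: leq_trans hQ.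
set w := INR #|W| in hw *.
set beta := (15/16) ^ (2 ^ n2).
have hb : 0 < beta by apply: pow_lt; lra.
set K := exp (lam * eps * 2 ^ n).
pose C (j : 'I_k.+1) := [set x in W | f x == j].
have hC j : j != ord0 -> INR #|C j| <= beta * w.
  move=> hj0.
  have hCW x : x \in C j -> x \in W by rewrite inE => /andP [].
  have hdist x y : x \in C j -> y \in C j -> 1 <= K * wt r (L x y).
    move=> hx hy.
    have hd : dist_m x y < eps.
      apply: Rle_lt_trans (hj j _); last by rewrite lt0n.
      have memj z : z \in C j -> z \in [set x | f x == j] by rewrite !inE => /andP [].
      by apply: diam_ge; apply: memj.
    have hl := Rle_lt_trans _ _ _ (dist_lb x y) hd.
    have h2m := pow2_pos m; have h2r := pow2_pos r; have h2n := pow2_pos n.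
    have hL : INR (L x y) < eps * 2 ^ r * 2 ^ n.
      have e2 : 2 ^ r * 2 ^ n = 2 ^ m by rewrite -pow_add hmr.
      rewrite Rmult_assoc e2.
      by move: hl; rewrite /Rdiv; move/(Rmult_lt_compat_r (2 ^ m) _ _ h2m);
         rewrite Rmult_assoc Rinv_l; lra.
    rewrite /K /wt -exp_plus -exp_0; left; apply: exp_increasing.
    have := lam_pos => hl0.
    have : lam / 2 ^ r * INR (L x y) < lam * eps * 2 ^ n.
      apply: (Rmult_lt_reg_l (2 ^ r)) => //.
      have -> : 2 ^ r * (lam / 2 ^ r * INR (L x y)) = lam * INR (L x y) by field; lra.
      nra.
    lra.
  have hsq : INR #|C j| ^ 2 <= K * Esum Q I.
    apply: Rle_trans (_ : \rsum_(x in C j) \rsum_(y in C j) (K * wt r (L x y)) <= _).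
      have -> : INR #|C j| ^ 2 = \rsum_(x in C j) \rsum_(y in C j) 1.
        rewrite (eq_bigr (fun _ => INR #|C j| * 1)); last by move=> x _; rewrite sumR_const_set.
        rewrite sumR_const_set; ring.
      apply: sumR_le => x hx; apply: sumR_le => y hy; exact: hdist.
    rewrite /Esum big_distrr; apply: Rle_trans.
      apply: sumR_le => x hx.
      apply: (sumR_sub (B := fun y => y \in W)) => [y|y _]; first exact: hCW.
      apply: Rmult_le_pos; [exact: Rlt_le (exp_pos _)|exact: Rlt_le (wt_pos _ _)].
    apply: Rle_trans.
      apply: (sumR_sub (B := fun x => x \in W)) => [x|x _]; first exact: hCW.
      apply: sumR_ge0 => y _.
      apply: Rmult_le_pos; [exact: Rlt_le (exp_pos _)|exact: Rlt_le (wt_pos _ _)].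
    right; apply: eq_bigr => x _; by rewrite big_distrr.
  have hn' : (m - #|I| = n2.+2)%N := hn.
  have hn1 : (1 <= m - #|I|)%N by rewrite hn'.
  have hE := E_bound hQ hn1; rewrite hn' /= -/W -/w in hE.
  have hK : K * (7/8) ^ (2 ^ n2.+1) <= beta ^ 2.
    have -> : K = exp (2 * lam * eps) ^ (2 ^ n2.+1).
      rewrite exp_pow INR_exp2 /K /n hn'; congr exp.
      rewrite -[2 ^ n2.+2]/(2 * 2 ^ n2.+1); ring.
    rewrite -Rpow_mult_distr /beta -pow_mult.
    have -> : Init.Nat.mul (2 ^ n2)%N 2 = (2 ^ n2.+1)%N by rewrite expnSr.
    apply: pow_incr; split.
      apply: Rmult_le_pos; [exact: Rlt_le (exp_pos _)|lra].
    lra.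
  have hK0 : 0 <= K by apply: Rlt_le; apply: exp_pos.
  have hE0 := Esum_ge0 Q I.
  have hC0 := pos_INR #|C j|.
  have : INR #|C j| ^ 2 <= (beta * w) ^ 2.
    apply: Rle_trans hsq _.
    apply: Rle_trans (Rmult_le_compat_l _ _ _ hK0 hE) _.
    have : 0 <= (7/8) ^ (2 ^ n2.+1) by apply: pow_le; lra.
    move: hK; set a := (7/8) ^ _ => hK ha.
    have hw2 : 0 <= w ^ 2 by apply: pow_le; lra.
    nra.
  move=> h; apply: Rsqr_incr_0 => //; last nra.
  by rewrite /Rsqr; move: h; rewrite /= !Rmult_1_r.
have hpart : w = \big[Rplus/0]_(j : 'I_k.+1) INR #|C j|.
  rewrite /w -[INR #|W|]Rmult_1_r -sumR_const_set.
  rewrite (@partition_big _ _ _ _ _ _ (fun x => x \in W) f xpredT) //=.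
  apply: eq_bigr => j _; rewrite sumR_const Rmult_1_r; congr INR.
  by apply: eq_card => x; rewrite [RHS]in_set.
have h0' : INR #|C ord0| < eps * w.
  move: h0; rewrite /nu_unif [X in INR X / _ < _ -> _](_ : _ = #|C ord0|).
    move=> h0.
    have -> : INR #|C ord0| = INR #|C ord0| / w * w by field; lra.
    exact: Rmult_lt_compat_r.
  by apply: eq_card => x; rewrite !inE andbC.
have hrest : \big[Rplus/0]_(j : 'I_k.+1 | true && (j != ord0)) INR #|C j| <= INR k * (beta * w).
  apply: Rle_trans (sumR_le (G := fun _ => beta * w) _) _.
    by move=> j /andP [_ hj0]; apply: hC.
  rewrite sumR_const; right; congr (INR _ * _).
  transitivity #|predC1 (@ord0 k)|; first by apply: eq_card => j; rewrite !inE.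
  by rewrite cardC1 card_ord.
have {}hpart : w = INR #|C ord0| +
    \big[Rplus/0]_(j : 'I_k.+1 | true && (j != ord0)) INR #|C j|.
  by rewrite {1}hpart (bigD1 ord0).
have hG : beta * (16/15) ^ (2 ^ n2) = 1.
  by rewrite /beta -Rpow_mult_distr -(pow1 (2 ^ n2)); congr pow; field.
have hG0 : 0 < (16/15) ^ (2 ^ n2) by apply: pow_lt; lra.
have hk0 := pos_INR k.
have : (1 - eps) * w < INR k * beta * w by nra.
move=> h1.
have h2 : 1 - eps < INR k * beta.
  apply: (Rmult_lt_reg_r w) => //; lra.
nra.
Qed.

Lemma least_ex (P : nat -> Prop) n : P n ->
  exists k, P k /\ forall k', P k' -> (k <= k')%N.
Proof.
elim: n {-2}n (leqnn n) => [|N IH] n hn hP.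
  exists n; split => // k' _; move: hn; rewrite leqn0 => /eqP ->; exact: leq0n.
case: (classic (exists k, (k < n)%N /\ P k)) => [[k [hk hPk]]|hno].
  apply: (IH k) => //; by rewrite -ltnS (leq_trans hk hn).
exists n; split => // k' hk'; rewrite leqNgt; apply/negP => hlt.
by apply: hno; exists k'.
Qed.

Lemma kmin_spec (T : finType) (mu : {set T} -> R) (d : T -> T -> R) eps k :
  admissible mu d eps k -> least_admissible mu d eps (kmin mu d eps).
Proof.
move=> hk; rewrite /kmin; apply: epsilon_spec.
have [k' [h1 h2]] := least_ex hk.
by exists k'.
Qed.

Lemma ln_pos_gt1 x : 1 < x -> 0 < ln x.
Proof. move=> h; rewrite -ln_1; apply: ln_increasing; lra. Qed.

Theorem lemma17 :
  forall q : nat, (2 <= q)%N ->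
  exists eps0 : R, 0 < eps0 /\
  forall eps : R, 0 < eps < eps0 ->
  exists c C : R, 0 < c /\ c <= C /\
  exists N : nat,
  forall (Q : finType) (m r : nat) (I : {set 'I_m}),
    #|Q| = q -> #|I| = r -> (N <= m - r)%N ->
    c * 2 ^ (m - r) <=
      Hent (nu_unif (Winv Q (Ggen I))) (@dist_m Q m) eps <= C * 2 ^ (m - r).
Proof.
move=> q hq.
have hl := lam_pos.
have hln1514 : 0 < ln (15/14) by apply: ln_pos_gt1; lra.
have hln1615 : 0 < ln (16/15) by apply: ln_pos_gt1; lra.
have hln2 : 0 < ln 2 by apply: ln_pos_gt1; lra.
have hl1514 : ln (15/14) < lam by rewrite /lam; apply: ln_increasing; lra.
exists (ln (15/14) / (2 * lam)); split.
  apply: Rdiv_lt_0_compat => //; lra.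
move=> eps [he he0].
have he2 : 2 * lam * eps < ln (15/14).
  move: he0; rewrite /Rdiv => he0.
  have := Rmult_lt_compat_l (2 * lam) _ _ ltac:(lra) he0.
  have -> : 2 * lam * (ln (15 / 14) * / (2 * lam)) = ln (15/14) by field; lra.
  lra.
have he12 : eps < 1 / 2 by nra.
have hexp : exp (2 * lam * eps) <= 15/14.
  by left; rewrite -(exp_ln (15/14)); [apply: exp_increasing|lra].
set c1 := ln (16/15) / ln 2.
have hc1 : 0 < c1 by apply: Rdiv_lt_0_compat.
have hq1 : 1 < INR q by apply: (lt_INR 1); apply/ltP.
have hlq : 0 <= ln (INR q) / ln 2.
  by apply: Rlt_le; apply: Rdiv_lt_0_compat => //; apply: ln_pos_gt1.
exists (c1 / 8), (c1 / 8 + ln (INR q) / ln 2); split; first lra.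
split; first lra.
have [N0 hN0] := INR_archimed c1 1 hc1.
exists (N0 + 3)%N => Q m r I hQ hI hN.
have hQ2 : (2 <= #|Q|)%N by rewrite hQ.
set n := (m - r)%N.
have [n2 hn2] : exists n2, n = n2.+2.
  by exists (n - 2)%N; rewrite /n -[in LHS](subnK (_ : (2 <= m - r)%N)) ?addn2 //;
     apply: leq_trans hN; rewrite addn3.
have hn2' : (N0.+1 <= n2)%N by move: hN; rewrite -/n hn2 addn3 ltnS ltnS.
have hmI : (m - #|I| = n2.+2)%N by rewrite hI -/n hn2.
set W := Winv Q (Ggen I).
set K := kmin (nu_unif W) (@dist_m Q m) eps.
have [hK1 hK2] : least_admissible (nu_unif W) (@dist_m Q m) eps K.
  by apply: (kmin_spec (k := #|W|)); apply: adm_upper.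
have hlow := adm_lower hQ2 hmI he (ltac:(lra)) hexp hK1.
have hup : (K <= #|W|)%N by apply: hK2; apply: adm_upper.
set G := (16/15) ^ (2 ^ n2).
have hG : 0 < G by apply: pow_lt; lra.
have hKpos : 0 < INR K by apply: Rlt_le_trans hlow; apply: Rmult_lt_0_compat => //; lra.
have hlnG : ln G = 2 ^ n2 * ln (16/15) by rewrite /G ln_pow ?INR_exp2 //; lra.
have h2n : 2 ^ n = 4 * 2 ^ n2 by rewrite hn2 /=; ring.
have hN2 : 2 <= c1 * 2 ^ n2.
  have h1 : INR N0 <= 2 ^ N0.
    rewrite -INR_exp2; apply: le_INR; apply/leP; apply: ltnW; exact: ltn_expl.
  have h2 : 2 ^ N0.+1 <= 2 ^ n2.
    by apply: Rle_pow; [lra|apply/leP].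
  have e2 : 2 ^ N0.+1 = 2 * 2 ^ N0 by [].
  have h3 : c1 * INR N0 <= c1 * 2 ^ N0 by apply: Rmult_le_compat_l; lra.
  have h4 : c1 * (2 * 2 ^ N0) <= c1 * 2 ^ n2 by apply: Rmult_le_compat_l; lra.
  lra.
rewrite /Hent /log2 -/n -/W -/K.
split.
  have hl1 : ln ((1 - eps) * G) <= ln (INR K).
    case: (Rle_lt_or_eq_dec _ _ hlow) => [h|->]; last lra.
    left; apply: ln_increasing => //; apply: Rmult_lt_0_compat => //; lra.
  rewrite ln_mult ?hlnG in hl1; try lra.
  have hle : - ln 2 <= ln (1 - eps).
    rewrite -ln_Rinv; last lra.
    case: (Req_dec (/ 2) (1 - eps)) => [->|hne]; first lra.
    left; apply: ln_increasing; lra.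
  apply: (Rmult_le_reg_r (ln 2)) => //.
  have -> : ln (INR K) / ln 2 * ln 2 = ln (INR K) by field; lra.
  rewrite h2n.
  have -> : c1 / 8 * (4 * 2 ^ n2) * ln 2 = (c1 * 2 ^ n2) / 2 * ln 2 by field.
  have -> : c1 * 2 ^ n2 = 2 ^ n2 * ln (16/15) / ln 2 by rewrite /c1; field; lra.
  have -> : 2 ^ n2 * ln (16 / 15) / ln 2 / 2 * ln 2 = 2 ^ n2 * ln (16/15) / 2 by field; lra.
  have : 2 * ln 2 <= 2 ^ n2 * ln (16/15).
    have -> : 2 ^ n2 * ln (16/15) = c1 * 2 ^ n2 * ln 2 by rewrite /c1; field; lra.
    nra.
  lra.
have hKW : ln (INR K) <= ln (INR #|W|).
  case: (Rle_lt_or_eq_dec _ _ (le_INR _ _ (elimT leP hup))) => [h|->]; last lra.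
  by left; apply: ln_increasing.
have hqpos : 0 < INR #|Q| by rewrite hQ; lra.
rewrite /W card_W hmI INR_expn (ln_pow _ hqpos) in hKW.
rewrite INR_exp2 hQ -hn2 in hKW.
apply: (Rmult_le_reg_r (ln 2)) => //.
have -> : ln (INR K) / ln 2 * ln 2 = ln (INR K) by field; lra.
have -> : (c1 * / 8 + ln (INR q) * / ln 2) * 2 ^ n * ln 2 =
  c1 * / 8 * 2 ^ n * ln 2 + 2 ^ n * ln (INR q) by field; lra.
have : 0 <= c1 * / 8 * 2 ^ n * ln 2.
  apply: Rmult_le_pos; last lra.
  apply: Rmult_le_pos; [lra|apply: Rlt_le; apply: pow2_pos].
lra.
Qed.
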